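(* Let $C=\{c_1,\dots,c_m\}\subset\mathbb{R}$ with $c_1\le\dots\le c_m$, let $\mathcal{I}$ be a finite set of closed intervals in $\mathbb{R}$ and $f\ge0$ an integer such that every $I\in\mathcal{I}$ satisfies $|I\cap C|>f$. Let $T$ be the output of the following greedy procedure: start with $T=\emptyset$; for $t=1,\dots,m$ in order, if there exist $i,j$ with $1\le i\le t\le j\le m$ and $\delta_{i,j}(f)\ge|T\cap C_{i,j}|+(j-t+1)$ (current $T$), add $c_t$ to $T$. Write $T=\{c_{k_1},\dots,c_{k_r}\}$ with $k_1<\dots<k_r$, and let $\mathsf{opt}$ be the minimum size of a subset $S\subseteq C$ satisfying $|S\cap C_{i,j}|\ge\delta_{i,j}(f)$ for all $1\le i\le j\le m$. Then for every $t\in\{1,\dots,r\}$ there exists $T^*\subseteq C$ such that (1) $|T^*\cap C_{i,j}|\ge\delta_{i,j}(f)$ for all $1\le i\le j\le m$, (2) $|T^*|=\mathsf{opt}$, and (3) $\{c_{k_1},\dots,c_{k_t}\}\subseteq T^*$.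
   Context: For a set of points $X$, a set of intervals is $X$-disjoint if every point of $X$ lies in at most one of its intervals. For $1\le i\le j\le m$: $C_{i,j}=\{c_i,\dots,c_j\}$; $\mathcal{I}_{i,j}=\{I\in\mathcal{I}: I\cap C\subseteq C_{i,j}\}$; for $J\subseteq C_{i,j}$, $\delta_{i,j}(J)$ is the maximum size of a $(C_{i,j}\setminus J)$-disjoint subset of $\mathcal{I}_{i,j}$; and $\delta_{i,j}(f)=\max_{J\subseteq C_{i,j},|J|\le f}\delta_{i,j}(J)$. *)

(* Defs.v *)
From HB Require Import structures.
From mathcomp Require Import all_boot all_order all_algebra.
From mathcomp Require Export finmap.
Set Implicit Arguments. Unset Strict Implicit. Unset Printing Implicit Defensive.
Import Order.TTheory GRing.Theory Num.Theory.
Local Open Scope fset_scope.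
Local Open Scope ring_scope.

Section Defs.
Variable R : realFieldType.
(* points c_1, ..., c_m given as a function on 1-based indices *)
Variable c : nat -> R.
Variable m : nat.

(* a closed interval [a, b] is represented by the pair (a, b) *)
Definition in_itv (I : R * R) (x : R) : bool := (I.1 <= x) && (x <= I.2).

Definition Cset : {fset R} := [fset c k | k in iota 1 m].

Definition Cij (i j : nat) : {fset R} := [fset c k | k in iota i (j.+1 - i)].

Definition itv_cap (I : R * R) (X : {fset R}) : {fset R} :=
  [fset x in X | in_itv I x].

Definition Iij (Iset : {fset R * R}) (i j : nat) : {fset R * R} :=
  [fset I in Iset | itv_cap I Cset `<=` Cij i j].

Definition disjoint_on (X : {fset R}) (K : {fset R * R}) : bool :=
  all (fun x => (#|` [fset I in K | in_itv I x]| <= 1)%N) (enum_fset X).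

Definition delta_J (Iset : {fset R * R}) (i j : nat) (J : {fset R}) : nat :=
  \max_(K <- enum_fset (fpowerset (Iij Iset i j)) | disjoint_on (Cij i j `\` J) K)
     #|` K|.

Definition delta (Iset : {fset R * R}) (f : nat) (i j : nat) : nat :=
  \max_(J <- enum_fset (fpowerset (Cij i j)) | (#|` J| <= f)%N) delta_J Iset i j J.

Definition feasibleb (Iset : {fset R * R}) (f : nat) (S : {fset R}) : bool :=
  (S `<=` Cset) &&
  all (fun i => all (fun j => (delta Iset f i j <= #|` S `&` Cij i j|)%N)
                    (iota i (m.+1 - i)))
      (iota 1 m).

(* opt = minimum size of a feasible S (C itself is feasible, so the
   default value #|C| of the fold is never smaller than the true minimum) *)
Definition opt (Iset : {fset R * R}) (f : nat) : nat :=
  \big[minn/#|` Cset|]_(S <- enum_fset (fpowerset Cset) | feasibleb Iset f S) #|` S|.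

Definition greedy_cond (Iset : {fset R * R}) (f : nat) (t : nat) (T : {fset R}) : bool :=
  has (fun i => has (fun j =>
         (#|` T `&` Cij i j| + (j.+1 - t) <= delta Iset f i j)%N)
       (iota t (m.+1 - t)))
    (iota 1 t).

Fixpoint greedy (Iset : {fset R * R}) (f : nat) (n : nat) : {fset R} :=
  match n with
  | 0 => fset0
  | n'.+1 => let T := greedy Iset f n' in
             if greedy_cond Iset f n T then c n |` T else T
  end.

Definition greedy_out (Iset : {fset R * R}) (f : nat) : {fset R} := greedy Iset f m.

Definition greedy_idx (Iset : {fset R * R}) (f : nat) : seq nat :=
  [seq k <- iota 1 m | c k \in greedy_out Iset f].

End Defs.

(* Main.v *)
Require Import Defs.
From HB Require Import structures.
From mathcomp Require Import all_boot all_order all_algebra.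
From mathcomp Require Import finmap zify.
Import Order.TTheory GRing.Theory Num.Theory.
Local Open Scope fset_scope.
Local Open Scope nat_scope.
Set Implicit Arguments. Unset Strict Implicit.

Definition cinj (R : realFieldType) (c : nat -> R) (m : nat) :=
  forall a b, 1 <= a <= m -> 1 <= b <= m -> c a = c b -> a = b.

Lemma c_lt (R : realFieldType) (c : nat -> R) m :
  (forall k, 1 <= k -> k < m -> (c k < c k.+1)%R) ->
  forall a b, 1 <= a -> a < b -> b <= m -> (c a < c b)%R.
Proof.
move=> cs a b a1; elim: b => [|b IH] // ab bm.
rewrite ltnS leq_eqVlt in ab; case/orP: ab => [/eqP E|ab].
  by subst b; apply: cs.
apply: lt_trans (IH ab (ltnW bm)) (cs b _ bm); lia.
Qed.

Lemma cinjP (R : realFieldType) (c : nat -> R) m :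
  (forall k, 1 <= k -> k < m -> (c k < c k.+1)%R) -> cinj c m.
Proof.
move=> cs a b /andP[a1 am] /andP[b1 bm] E.
case: (ltngtP a b) => // ab.
  by have := c_lt cs a1 ab bm; rewrite E ltxx.
by have := c_lt cs b1 ab am; rewrite E ltxx.
Qed.

Lemma ceq (R : realFieldType) (c : nat -> R) m a b : cinj c m ->
  1 <= a <= m -> 1 <= b <= m -> (c a == c b) = (a == b).
Proof.
move=> ci Ha Hb; apply/eqP/eqP => [|-> //]; exact: ci.
Qed.

Lemma mem_Cij_ex (R : realFieldType) (c : nat -> R) i j x :
  x \in Cij c i j -> exists2 k, i <= k <= j & x = c k.
Proof.
case/imfsetP => k /=; rewrite mem_iota => kin ->; exists k => //; lia.
Qed.

Lemma mem_Cij (R : realFieldType) (c : nat -> R) m i j k : cinj c m ->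
  1 <= i -> j <= m -> 1 <= k <= m -> (c k \in Cij c i j) = (i <= k <= j).
Proof.
move=> ci i1 jm km; apply/idP/idP.
  case/mem_Cij_ex => k' Hk' E; have := ci _ _ km _ E; lia.
move=> Hk; apply/imfsetP; exists k => //=; rewrite mem_iota; lia.
Qed.

Lemma Cij_sub (R : realFieldType) (c : nat -> R) m i j :
  1 <= i -> j <= m -> Cij c i j `<=` Cset c m.
Proof.
move=> i1 jm; apply/fsubsetP => x /mem_Cij_ex [k Hk ->].
apply/imfsetP; exists k => //=; rewrite mem_iota; lia.
Qed.

Lemma card_cnt (R : realFieldType) (c : nat -> R) m (S : {fset R}) i j :
  cinj c m -> 1 <= i -> j <= m ->
  #|` S `&` Cij c i j| = count (fun k => c k \in S) (iota i (j.+1 - i)).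
Proof.
move=> ci i1 jm.
have -> : S `&` Cij c i j = [fset c k | k in [seq k <- iota i (j.+1 - i) | c k \in S]].
  apply/fsetP => x; rewrite in_fsetI; apply/andP/imfsetP.
  - case=> xS /imfsetP [k /= kin E]; exists k => //=; by rewrite mem_filter -E xS kin.
  - case=> k /=; rewrite mem_filter => /andP[kS kin] ->; split => //.
    by apply/imfsetP; exists k.
rewrite card_in_imfset /=; last first.
  move=> a b /=; rewrite !mem_filter !mem_iota => /andP[_ Ha] /andP[_ Hb].
  apply: ci; lia.
by rewrite undup_id ?filter_uniq ?iota_uniq // size_filter.
Qed.

Lemma iota_split a b p : a <= p <= b ->
  iota a (b.+1 - a) = iota a (p - a) ++ p :: iota p.+1 (b - p).
Proof.
move=> Hp; have -> : b.+1 - a = (p - a) + (b - p).+1 by lia.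
rewrite iotaD; have -> : a + (p - a) = p by lia. by [].
Qed.

Lemma count_le_in (T : eqType) (a1 a2 : pred T) (s : seq T) :
  {in s, forall x, a1 x -> a2 x} -> count a1 s <= count a2 s.
Proof.
elim: s => //= x s IH H.
have Hx := H x (mem_head _ _).
have := IH (fun y ys => H y (@mem_behead _ (x :: s) _ ys)).
case: (a1 x) Hx => [-> //|_]; case: (a2 x); lia.
Qed.

Lemma count_swap (s : seq nat) (P P' : pred nat) q q' :
  uniq s -> q != q' -> P q -> ~~ P q' ->
  {in s, forall k, P' k = (k == q') || (P k && (k != q))} ->
  count P' s + (q \in s) = count P s + (q' \in s).
Proof.
move=> + qq' Pq Pq'; elim: s => //= x s IH /andP[xs us] H.
have IH' := IH us (fun y ys => H y (@mem_behead _ (x :: s) _ ys)).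
rewrite (H x (mem_head _ _)) !in_cons.
case: (eqVneq x q) => [E|xq].
  subst x; have qq'' : (q' == q) = false by rewrite eq_sym (negbTE qq').
  rewrite (negbTE qq') qq'' (negbTE xs) Pq /=; lia.
case: (eqVneq x q') => [E|xq'].
  subst x; rewrite (negbTE xs) in IH'; rewrite (negbTE Pq') /=; lia.
rewrite /= andbT; lia.
Qed.

Lemma sum_lt n (F G : 'I_n -> nat) i0 :
  (forall i, F i <= G i) -> F i0 < G i0 -> \sum_i F i < \sum_i G i.
Proof.
move=> H H0; rewrite (bigD1 i0) //= [X in _ < X](bigD1 i0) //=.
rewrite -addSn; apply: leq_add => //; exact: leq_sum.
Qed.

Lemma head_in (T : choiceType) (A : {fset T}) d x : x \in A -> head d (enum_fset A) \in A.
Proof. move=> xA; have : x \in enum_fset A by []. case E: (enum_fset A) => [|y s] //= _.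
have : y \in enum_fset A by rewrite E mem_head. by []. Qed.

Lemma delta_le (R : realFieldType) (c : nat -> R) m (Iset : {fset R * R}) f i j :
  (forall I, I \in Iset -> f < #|` itv_cap I (Cset c m)|) ->
  delta c m Iset f i j <= #|` Cij c i j|.
Proof.
move=> Ibig; rewrite /delta; apply/bigmax_leqP_seq => J _ HJ.
rewrite /delta_J; apply/bigmax_leqP_seq => K; rewrite fpowersetE => KI Kdis.
pose g (I : R * R) := head 0%R (enum_fset (itv_cap I (Cset c m) `\` J)).
have gP : forall I, I \in K -> g I \in itv_cap I (Cset c m) `\` J.
  move=> I IK; have IS : I \in Iset by move: (fsubsetP KI I IK); rewrite /Iij !inE => /andP[].
  have := Ibig I IS => Hb.
  have : itv_cap I (Cset c m) `\` J != fset0.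
    apply/negP => E; move: E; rewrite fsetD_eq0 => /fsubset_leq_card; lia.
  by case/fset0Pn => x xin; exact: (head_in _ xin).
have gC : forall I, I \in K -> g I \in Cij c i j `\` J.
  move=> I IK; have := gP I IK; rewrite !inE => /andP[-> xI] /=.
  have := fsubsetP KI I IK; rewrite /Iij !inE => /andP[_ /fsubsetP]; apply.
  by rewrite /itv_cap inE.
have -> : #|` K| = #|` [fset g I | I in K]|.
  apply/esym/eqP/card_in_imfsetP => I1 I2 I1K I2K E.
  have xC := gC I1 I1K.
  move: Kdis; rewrite /disjoint_on => /allP /(_ (g I1) xC) Hd.
  apply/eqP/negPn/negP => ne.
  have : [fset I1; I2] `<=` [fset I in K | Defs.in_itv I (g I1)].
    apply/fsubsetP => I /fset2P [] ->; rewrite !inE ?I1K ?I2K /=.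
      by move: (gP I1 I1K); rewrite !inE => /andP[_ /andP[_ ->]].
    by rewrite E; move: (gP I2 I2K); rewrite !inE => /andP[_ /andP[_ ->]].
  move/fsubset_leq_card; rewrite cardfs2 ne; lia.
apply: fsubset_leq_card; apply/fsubsetP => x /imfsetP [I /= IK ->].
by move: (gC I IK); rewrite inE => /andP[].
Qed.

Lemma greedy_ex (R : realFieldType) (c : nat -> R) m (Iset : {fset R * R}) f n x :
  x \in greedy c m Iset f n -> exists2 k, 1 <= k <= n & x = c k.
Proof.
elim: n => [|n IH] /=; first by rewrite inE.
case: ifP => _; last by case/IH => k Hk ->; exists k => //; lia.
rewrite in_fset1U => /orP[/eqP ->|]; first by exists n.+1; rewrite ?leqnn.
by case/IH => k Hk ->; exists k => //; lia.
Qed.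

Lemma mem_greedy (R : realFieldType) (c : nat -> R) m (Iset : {fset R * R}) f n k :
  cinj c m -> n <= m -> 1 <= k <= m ->
  (c k \in greedy c m Iset f n) =
  (k <= n) && greedy_cond c m Iset f k (greedy c m Iset f k.-1).
Proof.
move=> ci; elim: n => [|n IH] nm Hk /=; first by rewrite inE; case: k Hk.
have IH' := IH (ltnW nm) Hk.
case: (eqVneq k n.+1) => [E|ne].
  subst k; case: ifP => cond /=.
    by rewrite in_fset1U eqxx ltnSn.
  by rewrite IH' ltnn andbF.
have -> : (k <= n.+1) = (k <= n) by rewrite leq_eqVlt (negbTE ne) ltnS.
case: ifP => _ //; rewrite in_fset1U IH' (ceq ci Hk) ?(negbTE ne) //; lia.
Qed.

Lemma bigmin_att (T : eqType) (s : seq T) (P : pred T) (F : T -> nat) d x0 :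
  x0 \in s -> P x0 -> F x0 = d ->
  exists2 x, (x \in s) && P x & F x = \big[minn/d]_(x <- s | P x) F x.
Proof.
move=> x0s Px0 Fx0.
suff : \big[minn/d]_(x <- s | P x) F x = d \/
       exists2 x, (x \in s) && P x & F x = \big[minn/d]_(x <- s | P x) F x.
  by case => // ->; exists x0; rewrite ?x0s ?Px0.
elim: s {x0s} => [|y s IH]; first by left; rewrite big_nil.
rewrite big_cons; case: ifP => Py; last first.
  case: IH => [->|[x /andP[xs Px] E]]; [by left|right; exists x => //].
  by rewrite in_cons xs orbT.
case: IH => [->|[x /andP[xs Px] <-]].
  case: (leqP (F y) d) => H.
    by right; exists y; rewrite ?mem_head ?Py //; lia.
  by left; lia.
right; case: (leqP (F y) (F x)) => H.
  by exists y; rewrite ?mem_head ?Py //; lia.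
by exists x; rewrite ?in_cons ?xs ?Px ?orbT //; lia.
Qed.

Definition good (R : realFieldType) (c : nat -> R) m (Iset : {fset R * R}) f (S : {fset R}) :=
  S `<=` Cset c m /\
  (forall i j, 1 <= i -> i <= j -> j <= m ->
     delta c m Iset f i j <= #|` S `&` Cij c i j|) /\
  #|` S| = opt c m Iset f.

Lemma feasibleP (R : realFieldType) (c : nat -> R) m (Iset : {fset R * R}) f (S : {fset R}) :
  feasibleb c m Iset f S ->
  S `<=` Cset c m /\
  (forall i j, 1 <= i -> i <= j -> j <= m ->
     delta c m Iset f i j <= #|` S `&` Cij c i j|).
Proof.
case/andP => -> /allP H; split => // i j i1 ij jm.
have Hi : i \in iota 1 m by rewrite mem_iota; lia.
have /allP Hj := H i Hi.
have : j \in iota i (m.+1 - i) by rewrite mem_iota; lia.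
by move/Hj.
Qed.

Lemma opt_att (R : realFieldType) (c : nat -> R) m (Iset : {fset R * R}) f :
  (forall I, I \in Iset -> f < #|` itv_cap I (Cset c m)|) ->
  exists S, good c m Iset f S.
Proof.
move=> Ibig.
have feasC : feasibleb c m Iset f (Cset c m).
  rewrite /feasibleb fsubset_refl /=; apply/allP => i; rewrite mem_iota => Hi.
  apply/allP => j; rewrite mem_iota => Hj.
  apply: leq_trans (@delta_le _ c m Iset f i j Ibig) _.
  apply: fsubset_leq_card; apply/fsubsetP => x xC.
  by rewrite in_fsetI xC (fsubsetP (Cij_sub c (i := i) (j := j) (m := m) _ _)) //; lia.
have [S /andP[SP fS] E] := @bigmin_att _ (enum_fset (fpowerset (Cset c m)))
   (feasibleb c m Iset f) (fun S => #|` S|) #|` Cset c m| (Cset c m)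
   ltac:(by rewrite -[_ \in enum_fset _]/(_ \in fpowerset _) fpowersetE) feasC erefl.
by exists S; have [? ?] := feasibleP fS; split.
Qed.

Ltac slia := repeat match goal with
  | H : is_true (leq _ _) |- _ => revert H
  | H : @eq nat _ _ |- _ => revert H
  | H : is_true (andb (leq _ _) (leq _ _)) |- _ => revert H
  | H : is_true (negb (andb (leq _ _) (leq _ _))) |- _ => revert H
  | H : @eq bool (andb (leq _ _) (leq _ _)) _ |- _ => revert H
  | H : is_true (negb (leq _ _)) |- _ => revert H
  end; repeat match goal with H : _ |- _ => clear H end; intros; lia.

Definition cnt (R : realFieldType) (c : nat -> R) (S : {fset R}) (s : seq nat) : nat :=
  count (fun k => c k \in S) s.

Lemma card_cnt' (R : realFieldType) (c : nat -> R) m (S : {fset R}) i j :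
  cinj c m -> 1 <= i -> j <= m ->
  #|` S `&` Cij c i j| = cnt c S (iota i (j.+1 - i)).
Proof. exact: card_cnt. Qed.

Lemma cnt_cat (R : realFieldType) (c : nat -> R) (S : {fset R}) s1 s2 :
  cnt c S (s1 ++ s2) = cnt c S s1 + cnt c S s2.
Proof. exact: count_cat. Qed.

Lemma cnt_cons (R : realFieldType) (c : nat -> R) (S : {fset R}) x s :
  cnt c S (x :: s) = (c x \in S) + cnt c S s.
Proof. by []. Qed.

Lemma cnt_le_in (R : realFieldType) (c : nat -> R) (S1 S2 : {fset R}) s :
  {in s, forall k, c k \in S1 -> c k \in S2} -> cnt c S1 s <= cnt c S2 s.
Proof. exact: count_le_in. Qed.

Lemma cnt_size (R : realFieldType) (c : nat -> R) (S : {fset R}) s :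
  cnt c S s <= size s.
Proof. exact: count_size. Qed.

Lemma cnt_full (R : realFieldType) (c : nat -> R) (S : {fset R}) s :
  {in s, forall k, c k \in S} -> cnt c S s = size s.
Proof. by move=> H; rewrite /cnt -count_predT; apply: eq_in_count => k /H ->. Qed.

Lemma cnt_zero (R : realFieldType) (c : nat -> R) (S : {fset R}) s :
  {in s, forall k, c k \notin S} -> cnt c S s = 0.
Proof. by move=> H; rewrite /cnt -(count_pred0 s); apply: eq_in_count => k /H /negbTE ->. Qed.

Lemma cnt_swap (R : realFieldType) (c : nat -> R) (S S' : {fset R}) s q q' :
  uniq s -> q != q' -> c q \in S -> c q' \notin S ->
  {in s, forall k, (c k \in S') = (k == q') || ((c k \in S) && (k != q))} ->
  cnt c S' s + (q \in s) = cnt c S s + (q' \in s).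
Proof. move=> us qq' qS q'S H; exact: (count_swap us qq' qS q'S H). Qed.

Definition mu (R : realFieldType) (c : nat -> R) m (S : {fset R}) :=
  \sum_(k < m.+1) cnt c S (iota 1 k).

Lemma step (R : realFieldType) (c : nat -> R) m (Iset : {fset R * R}) f n (S : {fset R}) :
  cinj c m -> n < m -> greedy_cond c m Iset f n.+1 (greedy c m Iset f n) ->
  good c m Iset f S -> greedy c m Iset f n `<=` S -> c n.+1 \notin S ->
  exists S', [/\ good c m Iset f S', greedy c m Iset f n `<=` S' & mu c m S' < mu c m S].
Proof.
move=> ci nm cond [Ssub [Sfeas Scard]] GS cpS.
set T := greedy c m Iset f n in GS cond *.
have [i Hi [j Hj H]] : exists2 i : nat, i \in iota 1 n.+1 & exists2 j : nat,
    j \in iota n.+1 (m.+1 - n.+1) &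
    #|` T `&` Cij c i j| + (j.+1 - n.+1) <= delta c m Iset f i j.
  by case/hasP: cond => i ? /hasP [j ? ?]; exists i => //; exists j.
rewrite mem_iota in Hi; rewrite mem_iota in Hj.
have HS := Sfeas i j ltac:(slia) ltac:(slia) ltac:(slia).
rewrite (@card_cnt' R c m T i j ci ltac:(slia) ltac:(slia)) in H.
rewrite (@card_cnt' R c m S i j ci ltac:(slia) ltac:(slia)) in HS.
rewrite (@iota_split i j n.+1 ltac:(slia)) !cnt_cat !cnt_cons in H HS.
rewrite (negbTE cpS) in HS.
have c3 := cnt_size c S (iota n.+2 (j - n.+1)).
rewrite size_iota in c3.
have Hlt : cnt c T (iota i (n.+1 - i)) < cnt c S (iota i (n.+1 - i)) by slia.
have : has (fun k => (c k \in S) && (c k \notin T)) (iota i (n.+1 - i)).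
  apply/negPn/negP => /hasPn Hn.
  suff : cnt c S (iota i (n.+1 - i)) <= cnt c T (iota i (n.+1 - i)) by slia.
  apply: cnt_le_in.
  by move=> k kin kS; move: (Hn k kin); rewrite kS /= negbK.
move=> Hhas; have [q Hq /andP[qS qT]] : exists2 q : nat, q \in iota i (n.+1 - i) &
   (c q \in S) && (c q \notin T) by case/hasP: Hhas => q ? ?; exists q.
rewrite mem_iota in Hq; clear H HS c3 Hlt Hhas.
have qnp : greedy_cond c m Iset f q (greedy c m Iset f q.-1) = false.
  move: qT; rewrite /T (@mem_greedy R c m Iset f n q ci (ltnW nm) ltac:(slia)).
  by rewrite (_ : q <= n) /=; [move/negbTE|slia].
have exP : exists k, (q < k) && (k <= m) && (c k \notin S).
  by exists n.+1; rewrite cpS andbT; apply/andP; split; slia.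
case: (ex_minnP exP) => q' /andP[/andP[qq' q'm] q'S] q'min.
have q'p : q' <= n.+1.
  by apply: q'min; rewrite cpS andbT; apply/andP; split; slia.
have inS : forall k, q < k -> k < q' -> c k \in S.
  move=> k h1 h2; apply/negPn/negP => kS.
  have := q'min k; rewrite kS andbT.
  have -> : (q < k) && (k <= m) by apply/andP; split; slia.
  move=> /(_ isT); slia.
pose S' := c q' |` (S `\ c q).
have hq : 1 <= q <= m by slia.
have hq' : 1 <= q' <= m by slia.
have memS' : forall k, 1 <= k <= m -> (c k \in S') = (k == q') || ((c k \in S) && (k != q)).
  move=> k Hk; rewrite /S' in_fset1U in_fsetD1 (ceq ci Hk hq) (ceq ci Hk hq').
  by rewrite [X in _ || X]andbC.
have qneq : q != q' by rewrite neq_ltn qq'.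
exists S'; split.
- split; [|split].
  + apply/fsubsetP => x; rewrite /S' in_fset1U in_fsetD1 => /orP[/eqP ->|/andP[_ xS]].
      by apply/imfsetP; exists q' => //=; rewrite mem_iota; slia.
    exact: (fsubsetP Ssub).
  + move=> i' j' i1 ij jm.
    rewrite (@card_cnt' R c m S' i' j' ci i1 jm).
    have HS' := Sfeas i' j' i1 ij jm; rewrite (@card_cnt' R c m S i' j' ci i1 jm) in HS'.
    have sw : cnt c S' (iota i' (j'.+1 - i')) + (q \in iota i' (j'.+1 - i')) =
              cnt c S (iota i' (j'.+1 - i')) + (q' \in iota i' (j'.+1 - i')).
      apply: cnt_swap => //; first exact: iota_uniq.
      by move=> k; rewrite mem_iota => Hk; apply: memS'; slia.
    case qs: (q \in iota i' (j'.+1 - i')); rewrite qs in sw; last by slia.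
    case q's: (q' \in iota i' (j'.+1 - i')); rewrite q's in sw; first by slia.
    move: qs q's; rewrite !mem_iota => qs /negbT q's.
    have Hq1 : q' > j' by slia.
    move/negbT/hasPn: qnp => /(_ i'); rewrite mem_iota => /(_ ltac:(slia)) /hasPn /(_ j').
    rewrite mem_iota => /(_ ltac:(slia)).
    rewrite (@card_cnt' R c m _ i' j' ci i1 jm) -ltnNge.
    rewrite (@iota_split i' j' q ltac:(slia)) !cnt_cat !cnt_cons.
    have Gq : forall k, 1 <= k <= m -> (c k \in greedy c m Iset f q.-1) =
       (k <= q.-1) && greedy_cond c m Iset f k (greedy c m Iset f k.-1).
      by move=> k Hk; apply: mem_greedy => //; slia.
    rewrite Gq // (_ : q <= q.-1 = false) /=; last by slia.
    rewrite (memS' q hq) eqxx (negbTE qneq) /=.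
    rewrite (@cnt_zero R c (greedy c m Iset f q.-1) (iota q.+1 (j' - q))); last first.
      move=> k; rewrite mem_iota => Hk; rewrite Gq; last by slia.
      by rewrite (_ : k <= q.-1 = false) //; slia.
    have G1 : cnt c (greedy c m Iset f q.-1) (iota i' (q - i')) <= cnt c S' (iota i' (q - i')).
      apply: cnt_le_in => k; rewrite mem_iota => Hk; rewrite Gq; last by slia.
      case/andP => kq pk; rewrite memS'; last by slia.
      have : c k \in T.
        by rewrite /T (@mem_greedy R c m Iset f n k ci (ltnW nm) ltac:(slia)) pk andbT; slia.
      move/(fsubsetP GS) => -> /=; apply/orP; right; by rewrite neq_ltn; apply/orP; left; slia.
    rewrite (@cnt_full R c S' (iota q.+1 (j' - q))); last first.
      move=> k; rewrite mem_iota => Hk; rewrite memS'; last by slia.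
      by rewrite inS /=; slia.
    rewrite size_iota andbF.
    slia.
  + rewrite /S' cardfsU1 in_fsetD1 (negbTE q'S) andbF /=.
    have E := cardfsD1 (c q) S; rewrite qS in E; by rewrite -Scard E.
- apply/fsubsetP => x xT; rewrite /S' in_fset1U in_fsetD1 (fsubsetP GS _ xT) andbT.
  apply/orP; right; apply/eqP => E; by rewrite -E xT in qT.
- have swk : forall k, k <= m ->
    cnt c S' (iota 1 k) + (q \in iota 1 k) = cnt c S (iota 1 k) + (q' \in iota 1 k).
    move=> k km; apply: cnt_swap => //; first exact: iota_uniq.
    by move=> l; rewrite mem_iota => Hl; apply: memS'; slia.
  have q'lt : q < m.+1 by slia.
  rewrite /mu; apply: (@sum_lt _ _ _ (Ordinal q'lt)).
    move=> k; have := swk k (ltn_ord k); rewrite !mem_iota; slia.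
  have := swk q ltac:(slia); rewrite !mem_iota /=; slia.
Qed.

Lemma shift (R : realFieldType) (c : nat -> R) m (Iset : {fset R * R}) f n :
  cinj c m -> n < m -> greedy_cond c m Iset f n.+1 (greedy c m Iset f n) ->
  forall N (S : {fset R}), mu c m S <= N -> good c m Iset f S ->
  greedy c m Iset f n `<=` S ->
  exists S', [/\ good c m Iset f S', greedy c m Iset f n `<=` S' & c n.+1 \in S'].
Proof.
move=> ci nm cond; elim => [|N IH] S Hmu gS GS.
  case Hc: (c n.+1 \in S); first by exists S.
  have [S' [_ _ lt]] := step ci nm cond gS GS (negbT Hc).
  by move: Hmu lt; case: (mu c m S).
case Hc: (c n.+1 \in S); first by exists S.
have [S' [gS' GS' lt]] := step ci nm cond gS GS (negbT Hc).
apply: (IH S') => //; rewrite -ltnS; exact: leq_trans lt Hmu.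
Qed.

Lemma main (R : realFieldType) (c : nat -> R) m (Iset : {fset R * R}) f :
  cinj c m ->
  (forall I, I \in Iset -> f < #|` itv_cap I (Cset c m)|) ->
  forall n, n <= m -> exists S, good c m Iset f S /\ greedy c m Iset f n `<=` S.
Proof.
move=> ci Ibig; elim => [|n IH] nm.
  by have [S gS] := opt_att Ibig; exists S; split => //; apply: fsub0set.
have [S [gS GS]] := IH (ltnW nm).
rewrite /=; case: ifP => cond; last by exists S.
have [S' [gS' GS' cS']] := shift ci nm cond (leqnn _) gS GS.
by exists S'; split => //; rewrite fsubUset fsub1set cS'.
Qed.

Unset Implicit Arguments.
Local Open Scope ring_scope.

Theorem lemma8 (R : realFieldType) (m : nat) (c : nat -> R)
  (Iset : {fset R * R}) (f : nat)
  (c_sorted : forall k, (1 <= k)%N -> (k < m)%N -> c k < c k.+1)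
  (I_closed : forall I, I \in Iset -> I.1 <= I.2)
  (I_big : forall I, I \in Iset -> (f < #|` itv_cap I (Cset c m)|)%N) :
  let ks := greedy_idx c m Iset f in
  forall t, (1 <= t)%N -> (t <= size ks)%N ->
  exists Tstar : {fset R},
    Tstar `<=` Cset c m /\
    (forall i j, (1 <= i)%N -> (i <= j)%N -> (j <= m)%N ->
       (delta c m Iset f i j <= #|` Tstar `&` Cij c i j|)%N) /\
    #|` Tstar| = opt c m Iset f /\
    [fset c k | k in take t ks] `<=` Tstar.
Proof.
move=> ks t _ _.
have ci := cinjP c_sorted.
have [S [[Ssub [Sfeas Scard]] GS]] := main ci I_big (leqnn m).
exists S; do !split => //.
apply/fsubsetP => x /imfsetP [k /= kin ->].
have : k \in ks by apply: mem_take kin.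
rewrite /ks /greedy_idx mem_filter => /andP[ck _].
exact: (fsubsetP GS).
Qed.
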